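(* For every instance \(\mathcal{I}\) of 3-SAT, the graph \(G(\mathcal{I})\) constructed below is weakly chordal.
   Context: A graph is weakly chordal if neither it nor its complement contains an induced cycle of length at least 5. Let \(\mathcal{I}\) have variables \(x_1,\dots,x_k\) and clauses \(C_1,\dots,C_l\), each a disjunction of three literals. \(G(\mathcal{I})\) has vertices: literal vertices \(X=\{x_1,\dots,x_k,\overline{x_1},\dots,\overline{x_k}\}\), clause vertices \(c_1,\dots,c_l\), and six vertices \(r,p,q,a,b,t\). Edges: any two vertices of \(X\) are adjacent except the pairs \(x_j\overline{x_j}\); the clause vertices are pairwise nonadjacent; \(c_i\) is adjacent to every vertex of \(X\) except the three literal vertices of the literals of \(C_i\); each of \(r,p,q,a\) is adjacent to all literal vertices and all clause vertices; \(b\) is adjacent to all literal vertices; additionally the edges \(ab,ap,aq,bq,br,bt,pr,qr,qt\); no other edges. *)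

(* Defs.v *)
From mathcomp Require Import all_boot.
Set Implicit Arguments. Unset Strict Implicit. Unset Printing Implicit Defensive.

Definition compl_rel (T : finType) (e : rel T) : rel T :=
  fun x y => (x != y) && ~~ e x y.

Definition induced_cycle (T : finType) (e : rel T) (n : nat) (f : 'I_n -> T) : Prop :=
  injective f /\
  forall i j : 'I_n, i != j ->
    e (f i) (f j) = (((i.+1 %% n)%N == j) || ((j.+1 %% n)%N == i)).

Definition has_long_hole (T : finType) (e : rel T) : Prop :=
  exists n : nat, (5 <= n)%N /\ exists f : 'I_n -> T, induced_cycle e f.

Definition weakly_chordal (T : finType) (e : rel T) : Prop :=
  ~ has_long_hole e /\ ~ has_long_hole (compl_rel e).

(* literal = (variable index, polarity); (j, true) is x_j, (j, false) is ~x_j *)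
Definition literal (k : nat) := ('I_k * bool)%type.

Definition instance (k l : nat) := 'I_l -> 3.-tuple (literal k).

Definition vr : 'I_6 := @Ordinal 6 0 isT.
Definition vp : 'I_6 := @Ordinal 6 1 isT.
Definition vq : 'I_6 := @Ordinal 6 2 isT.
Definition va : 'I_6 := @Ordinal 6 3 isT.
Definition vb : 'I_6 := @Ordinal 6 4 isT.
Definition vt : 'I_6 := @Ordinal 6 5 isT.

(* vertices: literal vertices X, clause vertices c_i, special vertices *)
Definition vertex (k l : nat) := ((literal k + 'I_l) + 'I_6)%type.

Definition special_edges : seq ('I_6 * 'I_6) :=
  [:: (va, vb); (va, vp); (va, vq); (vb, vq); (vb, vr); (vb, vt);
      (vp, vr); (vq, vr); (vq, vt)].

Definition special_adj (s s' : 'I_6) : bool :=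
  ((s, s') \in special_edges) || ((s', s) \in special_edges).

Definition special_lit (s : 'I_6) : bool := s \in [:: vr; vp; vq; va; vb].
Definition special_clause (s : 'I_6) : bool := s \in [:: vr; vp; vq; va].

Definition G_adj (k l : nat) (I : instance k l) : rel (vertex k l) :=
  fun u v =>
  match u, v with
  | inl (inl x), inl (inl y) => x.1 != y.1
  | inl (inl x), inl (inr i) => x \notin I i
  | inl (inr i), inl (inl x) => x \notin I i
  | inl (inr _), inl (inr _) => false
  | inl (inl _), inr s => special_lit s
  | inr s, inl (inl _) => special_lit s
  | inl (inr _), inr s => special_clause s
  | inr s, inl (inr _) => special_clause s
  | inr s, inr s' => special_adj s s'
  end.

(* Main.v *)
Require Import Defs.
From mathcomp Require Import all_boot zify.
Set Implicit Arguments. Unset Strict Implicit. Unset Printing Implicit Defensive.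

Section G.
Variables (k l : nat) (I : instance k l).
Local Notation G := (G_adj I).

Ltac vcase v := case: v => [[?|?]|[[|[|[|[|[|[|?]]]]]] ?]]; try (vm_compute; intros; discriminate); try done.

Lemma Gsym : symmetric G.
Proof. move=> u v; vcase u; vcase v; by rewrite /= eq_sym. Qed.
Lemma Girr : irreflexive G.
Proof. move=> u; vcase u; by rewrite /= eqxx. Qed.

Lemma cq v : inr vq != v -> ~~ G (inr vq) v -> v \in [:: inr vp].
Proof. vcase v. Qed.
Lemma ct v : G (inr vt) v -> v \in [:: inr vb; inr vq].
Proof. vcase v. Qed.
Lemma cp v : inr vp != v -> ~~ G (inr vp) v -> v \in [:: inr vb; inr vq; inr vt].
Proof. vcase v. Qed.
Lemma ca v : inr va != v -> ~~ G (inr va) v -> v \in [:: inr vr; inr vt].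
Proof. vcase v. Qed.
Lemma cr v : inr vr != v -> ~~ G (inr vr) v -> v \in [:: inr va; inr vt].
Proof. vcase v. Qed.
Lemma cbn v : G (inr vb) v -> (exists x, v = inl (inl x)) \/ v \in [:: inr va; inr vq; inr vr; inr vt].
Proof. vcase v; intros; first [by left; eexists | by right; vm_compute]. Qed.
Lemma cbnn v : inr vb != v -> ~~ G (inr vb) v -> (exists c, v = inl (inr c)) \/ v \in [:: inr vp].
Proof. vcase v; intros; first [by left; eexists | by right; vm_compute]. Qed.
Lemma cspec s : s = vr \/ s = vp \/ s = vq \/ s = va \/ s = vb \/ s = vt.
Proof.
case: s => [[|[|[|[|[|[|?]]]]]] ?] //; 
 do ?[by left; apply: val_inj | right]; by apply: val_inj.
Qed.
End G.

Lemma lit_eq k (x y z : literal k) : x.1 == y.1 -> x.1 == z.1 -> x != y -> x != z -> y = z.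
Proof.
case: x y z => [a b] [c d] [e g] /= /eqP <- /eqP <-.
by case: b; case: d; case: g; rewrite ?eqxx.
Qed.
Definition cadj (n i j : nat) : Prop :=
  i.+1 = j \/ j.+1 = i \/ (i.+1 = n /\ j = 0) \/ (j.+1 = n /\ i = 0).

Lemma succmod (n i : nat) : i < n -> i.+1 %% n = if i.+1 == n then 0 else i.+1.
Proof.
move=> h; case: eqP => [->|h']; first by rewrite modnn.
rewrite modn_small //; lia.
Qed.

Section Hole.
Variables (T : finType) (e : rel T) (n : nat) (f : 'I_n -> T).
Hypotheses (en : 5 <= n) (hc : induced_cycle e f) (irr : irreflexive e).

Lemma hadj (i j : 'I_n) : e (f i) (f j) <-> cadj n i j.
Proof.
have hi := ltn_ord i; have hj := ltn_ord j.
case: (eqVneq i j) => [<-|ne].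
  rewrite irr; split => // ; rewrite /cadj; lia.
have nev : (i : nat) <> j by move=> h; move/eqP: ne; apply; apply: val_inj.
case: hc => _ h; rewrite (h _ _ ne) (succmod hi) (succmod hj).
rewrite /cadj; case E1: (i.+1 == n); case E2: (j.+1 == n); lia.
Qed.

Definition inH (v : T) := exists i, f i = v.

Lemma exord (k : nat) : k < n -> exists j : 'I_n, (j : nat) = k.
Proof. by move=> h; exists (Ordinal h). Qed.

Lemma vneq (i j : 'I_n) : f i != f j -> (i : nat) <> j.
Proof. by move=> h E; move/eqP: h; apply; congr f; apply: val_inj. Qed.

Lemma ineq (i j : 'I_n) : (i : nat) <> j -> f i != f j.
Proof.
move=> h; apply/eqP => E; apply: h; case: hc => inj _.
by rewrite (inj _ _ E).
Qed.

Lemma vnbr2 u : inH u -> exists v w, [/\ inH v, inH w, v != w, e u v & e u w].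
Proof.
case=> i <-; have hi := ltn_ord i.
have [j1 [h1 a1]] : exists j1 : 'I_n, (j1 : nat) <> i /\ cadj n i j1 /\ (j1 = i.+1 :> nat \/ (i.+1 = n /\ j1 = 0 :> nat)).
  case: (ltnP i.+1 n) => h.
    have [j E] := exord h; exists j; rewrite /cadj; lia.
  have [j E] := @exord 0 (ltac:(lia)); exists j; rewrite /cadj; lia.
have [j2 [h2 [h3 a2]]] : exists j2 : 'I_n, (j2 : nat) <> i /\ (j2 : nat) <> j1 /\ cadj n i j2.
  case: (posnP i) => h.
    have [j E] := @exord n.-1 (ltac:(lia)); exists j; rewrite /cadj; lia.
  have [j E] := @exord i.-1 (ltac:(lia)); exists j; rewrite /cadj; lia.
exists (f j1), (f j2); split; try by eexists.
  by apply: ineq => E; apply: h3.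
by apply/hadj; case: a1.
by apply/hadj.
Qed.

Lemma vnonnbr2 u : inH u -> exists v w,
  [/\ inH v, inH w, v != w, u != v & [/\ u != w, ~~ e u v & ~~ e u w]].
Proof.
case=> i <-; have hi := ltn_ord i.
have [j1 [h1 a1]] : exists j1 : 'I_n, (j1 : nat) <> i /\ ~ cadj n i j1 /\
   (j1 = i.+2 :> nat \/ j1 + n = i.+2 :> nat).
  case: (ltnP i.+2 n) => h.
    have [j E] := exord h; exists j; rewrite /cadj; lia.
  have [j E] := @exord (i.+2 - n) (ltac:(lia)); exists j; rewrite /cadj; lia.
have [j2 [h2 [h3 a2]]] : exists j2 : 'I_n, (j2 : nat) <> i /\ (j2 : nat) <> j1 /\ ~ cadj n i j2.
  case: (ltnP i.+3 n) => h.
    have [j E] := exord h; exists j; rewrite /cadj; lia.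
  have [j E] := @exord (i.+3 - n) (ltac:(lia)); exists j; rewrite /cadj; lia.
exists (f j1), (f j2); split; try by eexists.
- by apply: ineq => E; apply: h3.
- by apply: ineq => E; apply: h1.
- split.
  + by apply: ineq => E; apply: h2.
  + by apply/negP => /hadj; case: a1.
  + by apply/negP => /hadj.
Qed.

Lemma vdeg3 u v1 v2 v3 : inH u -> inH v1 -> inH v2 -> inH v3 ->
  v1 != v2 -> v1 != v3 -> v2 != v3 -> e u v1 -> e u v2 -> e u v3 -> False.
Proof.
case=> i <- [j1 <-] [j2 <-] [j3 <-] /vneq d1 /vneq d2 /vneq d3.
move=> /hadj a1 /hadj a2 /hadj a3.
have := ltn_ord i; have := ltn_ord j1; have := ltn_ord j2; have := ltn_ord j3.
move: a1 a2 a3; rewrite /cadj; lia.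
Qed.

Lemma vtri u v w : inH u -> inH v -> inH w -> e u v -> e v w -> e u w -> False.
Proof.
case=> i <- [j1 <-] [j2 <-] /hadj a1 /hadj a2 /hadj a3.
have := ltn_ord i; have := ltn_ord j1; have := ltn_ord j2.
move: a1 a2 a3; rewrite /cadj; lia.
Qed.

Lemma vc4 u w y z : inH u -> inH w -> inH y -> inH z -> u != w -> y != z ->
  e u y -> e u z -> e w y -> e w z -> False.
Proof.
case=> i <- [j1 <-] [j2 <-] [j3 <-] /vneq d1 /vneq d2.
move=> /hadj a1 /hadj a2 /hadj a3 /hadj a4.
have := ltn_ord i; have := ltn_ord j1; have := ltn_ord j2; have := ltn_ord j3.
move: a1 a2 a3 a4; rewrite /cadj; lia.
Qed.

End Hole.

Lemma eq_neq (T : eqType) (a b c : T) : a == b -> (a != c) = (b != c).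
Proof. by move/eqP->. Qed.

Section GHole.
Variables (k l : nat) (I : instance k l) (n : nat) (f : 'I_n -> vertex k l).
Hypotheses (n5 : 5 <= n) (hc : induced_cycle (G_adj I) f).
Local Notation G := (G_adj I).
Local Notation H := (inH f).
Local Notation lit x := (inl (inl x) : vertex k l).
Local Notation cl c := (inl (inr c) : vertex k l).

Let irrG := @Girr k l I.
Let nb := vnbr2 n5 hc irrG.
Let nn := vnonnbr2 n5 hc irrG.
Let d3 := vdeg3 n5 hc irrG.
Let tri := vtri n5 hc irrG.
Let c4 := vc4 n5 hc irrG.

Lemma GS u v : G u v -> G v u.
Proof. by rewrite Gsym. Qed.

Lemma adj_neq u v : G u v -> u != v.
Proof. by apply: contraTneq => ->; rewrite irrG. Qed.

Lemma g_noq : ~ H (inr vq).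
Proof.
move=> h; have [v [w [hv hw vw qv [qw nv nw]]]] := nn h.
move: (cq qv nv) (cq qw nw); rewrite !inE => /eqP E1 /eqP E2.
by rewrite E1 E2 eqxx in vw.
Qed.

Lemma g_not : ~ H (inr vt).
Proof.
move=> h; have [v [w [hv hw vw tv tw]]] := nb h.
move: (ct tv) (ct tw); rewrite !inE => /orP[/eqP E1|/eqP E1] /orP[/eqP E2|/eqP E2]; subst.
- by rewrite eqxx in vw.
- exact: g_noq hw.
- exact: g_noq hv.
- exact: g_noq hv.
Qed.

Lemma g_nop : ~ H (inr vp).
Proof.
move=> h; have [v [w [hv hw vw qv [qw nv nw]]]] := nn h.
move: (cp qv nv) (cp qw nw); rewrite !inE => /or3P[]/eqP E1 /or3P[]/eqP E2; subst;
 by [rewrite eqxx in vw | case: (g_noq hv) | case: (g_noq hw) | case: (g_not hv) | case: (g_not hw)].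
Qed.

Lemma g_noa : ~ H (inr va).
Proof.
move=> h; have [v [w [hv hw vw qv [qw nv nw]]]] := nn h.
move: (ca qv nv) (ca qw nw); rewrite !inE => /orP[]/eqP E1 /orP[]/eqP E2; subst;
 by [rewrite eqxx in vw | case: (g_not hv) | case: (g_not hw)].
Qed.

Lemma g_nor : ~ H (inr vr).
Proof.
move=> h; have [v [w [hv hw vw qv [qw nv nw]]]] := nn h.
move: (cr qv nv) (cr qw nw); rewrite !inE => /orP[]/eqP E1 /orP[]/eqP E2; subst;
 by [rewrite eqxx in vw | case: (g_not hv) | case: (g_not hw)].
Qed.

Lemma g_nosp s : s != vb -> ~ H (inr s).
Proof.
case: (cspec s) => [->|[->|[->|[->|[->|->]]]]] // _;
 [exact: g_nor | exact: g_nop | exact: g_noq | exact: g_noa | exact: g_not].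
Qed.

Lemma g_lit v : H v -> G (inr vb) v -> exists x, v = lit x.
Proof.
move=> hv /cbn [//|]; rewrite !inE => /or4P [] /eqP E; subst;
 by [case: (g_noa hv) | case: (g_noq hv) | case: (g_nor hv) | case: (g_not hv)].
Qed.

Lemma g_cl v : H v -> inr vb != v -> ~~ G (inr vb) v -> exists c, v = cl c.
Proof.
move=> hv bv nv; case: (cbnn bv nv) => //; rewrite inE => /eqP E; subst.
by case: (g_nop hv).
Qed.

Lemma litne (x y : literal k) : x != y -> lit x != lit y.
Proof. by apply: contra => /eqP [] ->. Qed.

Lemma g_nob : ~ H (inr vb).
Proof.
move=> hb.
have [x [y [hx hy xy bx b_y]]] := nb hb.
have [x' ?] := g_lit hx bx; have [y' ?] := g_lit hy b_y; subst x y.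
have inxy : forall z, H (lit z) -> z = x' \/ z = y'.
  move=> z hz; case: (eqVneq z x') => [|zx]; [by left|].
  case: (eqVneq z y') => [|zy]; [by right|].
  exfalso; apply: (d3 hb hx hy hz xy _ _ bx b_y isT).
    by apply: litne; rewrite eq_sym.
  by apply: litne; rewrite eq_sym.
have [c1 [c2 [hc1 hc2 c12 bc1 [bc2 nc1 nc2]]]] := nn hb.
have [d1 ?] := g_cl hc1 bc1 nc1; have [d2 ?] := g_cl hc2 bc2 nc2; subst c1 c2.
have cxy : forall d, H (cl d) -> G (cl d) (lit x') && G (cl d) (lit y').
  move=> d hd; have [z1 [z2 [hz1 hz2 z12 dz1 dz2]]] := nb hd.
  have getlit : forall z, H z -> G (cl d) z -> exists x, z = lit x.
    move=> z; case: z => [[x|c]|s] hz; [by eexists | by vm_compute | ].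
    case: (eqVneq s vb) => [->|ne _]; first by vm_compute.
    by case: (g_nosp ne hz).
  have [a1 ?] := getlit _ hz1 dz1; have [a2 ?] := getlit _ hz2 dz2; subst z1 z2.
  case: (inxy _ hz1) => E1; case: (inxy _ hz2) => E2; subst;
    by rewrite ?eqxx in z12; rewrite ?dz1 ?dz2.
move/andP: (cxy _ hc1) => [g1 g2]; move/andP: (cxy _ hc2) => [g3 g4].
exact: (c4 hc1 hc2 hx hy c12 xy g1 g2 g3 g4).
Qed.

Lemma g_nosp_all s : ~ H (inr s).
Proof. by case: (eqVneq s vb) => [->|]; [exact: g_nob | exact: g_nosp]. Qed.

Lemma g_kinds v : H v -> (exists x, v = lit x) \/ (exists c, v = cl c).
Proof.
case: v => [[x|c]|s] hv; [by left; eexists | by right; eexists | case: (g_nosp_all hv)].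
Qed.

Lemma g_getlit c z : H z -> G (cl c) z -> exists x, z = lit x.
Proof.
move=> hz; case: (g_kinds hz) => [//|[d ->]]; by vm_compute.
Qed.

Lemma g_noc c : ~ H (cl c).
Proof.
move=> hc0; have [x [y [hx hy xy cx cy]]] := nb hc0.
have [x' ?] := g_getlit hx cx; have [y' ?] := g_getlit hy cy; subst x y.
have nxy : ~~ G (lit x') (lit y').
  by apply/negP => gxy; apply: (tri hc0 hx hy cx gxy cy).
have exy : x'.1 == y'.1 by move: nxy => /= /negPn.
have [w [w' [hw hw' ww' xw xw']]] := nb hx.
have [w0 [hw0 xw0 wc]] : exists w0, [/\ H w0, G (lit x') w0 & w0 != cl c].
  case: (eqVneq w (cl c)) => [E|ne]; last by exists w.
  by exists w'; subst; split => //; rewrite eq_sym.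
case: (g_kinds hw0) => [[z ?]|[d ?]]; subst w0.
  have yz : G (lit y') (lit z) by move: xw0 => /=; rewrite (eq_neq _ exy).
  by apply: (c4 hx hy hc0 hw0 xy _ (GS cx) xw0 (GS cy) yz).
have [z1 [z2 [hz1 hz2 z12 dz1 dz2]]] := nb hw0.
have [z0 [hz0 dz0 zx]] : exists z0, [/\ H z0, G (cl d) z0 & z0 != lit x'].
  case: (eqVneq z1 (lit x')) => [E|ne]; last by exists z1.
  by exists z2; subst; split => //; rewrite eq_sym.
have [z ?] := g_getlit hz0 dz0; subst z0.
case: (eqVneq z.1 x'.1) => [E|ne].
  have yz : y' = z.
    apply: (@lit_eq _ x').
    - exact: exy.
    - by rewrite E.
    - by apply: contraNneq xy => ->.
    - by apply: contraNneq zx => ->.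
  subst z.
  by apply: (c4 hx hy hc0 hw0 xy _ (GS cx) xw0 (GS cy) (GS dz0)); rewrite eq_sym.
have xz : G (lit x') (lit z) by rewrite /= eq_sym.
apply: (d3 hx hc0 hw0 hz0 _ _ _ (GS cx) xw0 xz); [by rewrite eq_sym | by [] | by []].

Qed.

Lemma g_false : False.
Proof.
have h0 : H (f (Ordinal (leq_trans (isT : 0 < 5) n5))) by eexists.
case: (g_kinds h0) => [[x E]|[c E]]; rewrite E in h0; last exact: g_noc h0.
have [y [z [hy hz yz xy xz]]] := nb h0.
case: (g_kinds hy) => [[y' ?]|[c ?]]; subst y; last exact: g_noc hy.
case: (g_kinds hz) => [[z' ?]|[c ?]]; subst z; last exact: g_noc hz.
have nyz : ~~ G (lit y') (lit z').
  by apply/negP => gyz; apply: (tri h0 hy hz xy gyz xz).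
have eyz : y'.1 == z'.1 by move: nyz => /= /negPn.
have [w [w' [hw hw' ww' yw yw']]] := nb hy.
have [w0 [hw0 yw0 wx]] : exists w0, [/\ H w0, G (lit y') w0 & w0 != lit x].
  case: (eqVneq w (lit x)) => [E'|ne]; last by exists w.
  by exists w'; subst; split => //; rewrite eq_sym.
case: (g_kinds hw0) => [[w1 ?]|[c ?]]; subst w0; last exact: g_noc hw0.
have zw : G (lit z') (lit w1) by move: yw0 => /=; rewrite (eq_neq _ eyz).
case: (eqVneq w1.1 x.1) => [E'|ne].
  by apply: (c4 h0 hw0 hy hz _ yz xy xz (GS yw0) (GS zw)); rewrite eq_sym.
have xw : G (lit x) (lit w1) by rewrite /= eq_sym.
apply: (d3 h0 hy hz hw0 yz (adj_neq yw0) (adj_neq zw) xy xz xw).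
Qed.

End GHole.

Section CHole.
Variables (k l : nat) (I : instance k l) (n : nat) (f : 'I_n -> vertex k l).
Local Notation G := (G_adj I).
Local Notation E := (compl_rel (G_adj I)).
Hypotheses (n5 : 5 <= n) (hc : induced_cycle E f).
Local Notation H := (inH f).
Local Notation lit x := (inl (inl x) : vertex k l).
Local Notation cl c := (inl (inr c) : vertex k l).

Lemma irrE : irreflexive E.
Proof. by move=> x; rewrite /compl_rel eqxx. Qed.

Let nb := vnbr2 n5 hc irrE.
Let nn := vnonnbr2 n5 hc irrE.
Let d3 := vdeg3 n5 hc irrE.
Let tri := vtri n5 hc irrE.
Let c4 := vc4 n5 hc irrE.

Lemma ES u v : E u v -> E v u.
Proof. by rewrite /compl_rel eq_sym Gsym. Qed.
Lemma Eneq u v : E u v -> u != v.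
Proof. by case/andP. Qed.
Lemma EnG u v : E u v -> ~~ G u v.
Proof. by case/andP. Qed.
Lemma nEG u v : u != v -> ~~ E u v -> G u v.
Proof. by rewrite /compl_rel => -> /= /negPn. Qed.
Lemma Ecl c d : cl c != cl d -> E (cl c) (cl d).
Proof. by rewrite /compl_rel => ->. Qed.
Lemma Elit x w : E (lit x) (lit w) -> x != w /\ x.1 == w.1.
Proof.
case/andP => ne /negPn eq; split => //.
Qed.

Lemma c_noq : ~ H (inr vq).
Proof.
move=> h; have [v [w [hv hw vw qv qw]]] := nb h.
move: (cq (Eneq qv) (EnG qv)) (cq (Eneq qw) (EnG qw)); rewrite !inE => /eqP E1 /eqP E2.
by rewrite E1 E2 eqxx in vw.
Qed.

Lemma c_not : ~ H (inr vt).
Proof.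
move=> h; have [v [w [hv hw vw tv [tw nv nw]]]] := nn h.
move: (ct (nEG tv nv)) (ct (nEG tw nw)); rewrite !inE => /orP[/eqP E1|/eqP E1] /orP[/eqP E2|/eqP E2]; subst.
- by rewrite eqxx in vw.
- exact: c_noq hw.
- exact: c_noq hv.
- exact: c_noq hv.
Qed.

Lemma c_nop : ~ H (inr vp).
Proof.
move=> h; have [v [w [hv hw vw qv qw]]] := nb h.
move: (cp (Eneq qv) (EnG qv)) (cp (Eneq qw) (EnG qw)); rewrite !inE => /or3P[]/eqP E1 /or3P[]/eqP E2; subst;
 by [rewrite eqxx in vw | case: (c_noq hv) | case: (c_noq hw) | case: (c_not hv) | case: (c_not hw)].
Qed.

Lemma c_noa : ~ H (inr va).
Proof.
move=> h; have [v [w [hv hw vw qv qw]]] := nb h.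
move: (ca (Eneq qv) (EnG qv)) (ca (Eneq qw) (EnG qw)); rewrite !inE => /orP[]/eqP E1 /orP[]/eqP E2; subst;
 by [rewrite eqxx in vw | case: (c_not hv) | case: (c_not hw)].
Qed.

Lemma c_nor : ~ H (inr vr).
Proof.
move=> h; have [v [w [hv hw vw qv qw]]] := nb h.
move: (cr (Eneq qv) (EnG qv)) (cr (Eneq qw) (EnG qw)); rewrite !inE => /orP[]/eqP E1 /orP[]/eqP E2; subst;
 by [rewrite eqxx in vw | case: (c_not hv) | case: (c_not hw)].
Qed.

Lemma c_nob : ~ H (inr vb).
Proof.
move=> h; have [v [w [hv hw vw bv bw]]] := nb h.
case: (cbnn (Eneq bv) (EnG bv)) => [[c ?]|]; last by rewrite inE => /eqP ?; subst; case: (c_nop hv).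
case: (cbnn (Eneq bw) (EnG bw)) => [[d ?]|]; last by rewrite inE => /eqP ?; subst; case: (c_nop hw).
subst; exact: (tri h hv hw bv (Ecl vw) bw).
Qed.

Lemma c_nosp s : ~ H (inr s).
Proof.
case: (cspec s) => [->|[->|[->|[->|[->|->]]]]];
 [exact: c_nor | exact: c_nop | exact: c_noq | exact: c_noa | exact: c_nob | exact: c_not].
Qed.

Lemma c_kinds v : H v -> (exists x, v = lit x) \/ (exists c, v = cl c).
Proof.
case: v => [[x|c]|s] hv; [by left; eexists | by right; eexists | case: (c_nosp hv)].
Qed.

Lemma pick_other u x : H u -> exists2 w, H w & (E u w /\ w != x).
Proof.
move=> hu; have [w1 [w2 [h1 h2 w12 e1 e2]]] := nb hu.
case: (eqVneq w1 x) => [E1|ne]; last by exists w1.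
by exists w2 => //; split => //; rewrite -E1 eq_sym.
Qed.

Lemma c_cc c d : H (cl c) -> H (cl d) -> E (cl c) (cl d) -> False.
Proof.
move=> hc0 hd0 ecd.
have [u hu [cu ud]] := pick_other (cl d) hc0.
case: (c_kinds hu) => [[x ?]|[d' ?]]; subst u; last first.
  exact: (tri hc0 hd0 hu ecd (Ecl ud) cu) || (apply: (tri hc0 hd0 hu ecd _ cu); apply: Ecl; by rewrite eq_sym).
have [w hw [xw wc]] := pick_other (cl c) hu.
case: (c_kinds hw) => [[z ?]|[e' ?]]; subst w.
  have [xz ez] := Elit xw.
  have [g hg [zg gx]] := pick_other (lit x) hw.
  case: (c_kinds hg) => [[y ?]|[g' ?]]; subst g.
    have [zy ey] := Elit zg.
    have : x = y.
      apply: (@lit_eq _ z) => //; first by rewrite eq_sym.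
      by rewrite eq_sym.
    by move=> ?; subst y; rewrite eqxx in gx.
  case: (eqVneq (cl g') (cl c)) => [E1|ne1].
    rewrite E1 in zg.
    by apply: (d3 hc0 hd0 hu hw _ _ _ ecd cu (ES zg)).
  case: (eqVneq (cl g') (cl d)) => [E2|ne2].
    rewrite E2 in zg.
    by apply: (c4 hc0 hw hu hd0 _ _ cu ecd (ES xw) zg).
  by apply: (d3 hc0 hd0 hu hg _ _ _ ecd cu (Ecl _)); rewrite // eq_sym.
case: (eqVneq (cl e') (cl d)) => [E2|ne2].
  rewrite E2 in xw.
  exact: (tri hc0 hd0 hu ecd (ES xw) cu).
by apply: (d3 hc0 hd0 hu hw _ _ _ ecd cu (Ecl _)); rewrite // eq_sym.
Qed.

Lemma c_noc c : ~ H (cl c).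
Proof.
move=> hc0; have [x1 [x2 [h1 h2 x12 c1 c2]]] := nb hc0.
case: (c_kinds h1) => [[y1 ?]|[d ?]]; subst x1; last exact: (c_cc hc0 h1 c1).
case: (c_kinds h2) => [[y2 ?]|[d ?]]; subst x2; last exact: (c_cc hc0 h2 c2).
have [w hw [yw wc]] := pick_other (cl c) h1.
case: (c_kinds hw) => [[z ?]|[d ?]]; subst w; last first.
  by apply: (c_cc hc0 hw); apply: Ecl; rewrite eq_sym.
have [yz ez] := Elit yw.
have [g hg [zg gy]] := pick_other (lit y1) hw.
case: (c_kinds hg) => [[y ?]|[g' ?]]; subst g.
  have [zy ey] := Elit zg.
  have : y1 = y.
    apply: (@lit_eq _ z) => //; first by rewrite eq_sym.
    by rewrite eq_sym.
  by move=> ?; subst y; rewrite eqxx in gy.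
case: (eqVneq (cl g') (cl c)) => [E1|ne1]; last by apply: (c_cc hc0 hg); apply: Ecl; rewrite eq_sym.
rewrite E1 in zg.
case: (eqVneq (lit y2) (lit z)) => [E2|ne2].
  rewrite -E2 in yw; exact: (tri hc0 h1 h2 c1 yw c2).
by apply: (d3 hc0 h1 h2 hw x12 _ ne2 c1 c2 (ES zg)); apply: contraNneq yz => [[]] ->.
Qed.

Lemma c_false : False.
Proof.
have h0 : H (f (Ordinal (leq_trans (isT : 0 < 5) n5))) by eexists.
case: (c_kinds h0) => [[x E0]|[c E0]]; rewrite E0 in h0; last exact: c_noc h0.
have [y [z [hy hz yz xy xz]]] := nb h0.
case: (c_kinds hy) => [[y' ?]|[c ?]]; subst y; last exact: c_noc hy.
case: (c_kinds hz) => [[z' ?]|[c ?]]; subst z; last exact: c_noc hz.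
have [ny ey] := Elit xy; have [nz ez] := Elit xz.
have := lit_eq ey ez ny nz; move=> ?; subst z'.
by rewrite eqxx in yz.
Qed.

End CHole.

Theorem lemma13 (k l : nat) (I : instance k l) : weakly_chordal (G_adj I).
Proof.
split.
  by move=> [n [n5 [f hc]]]; exact: (g_false n5 hc).
by move=> [n [n5 [f hc]]]; exact: (c_false n5 hc).
Qed.
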